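(* For every $\delta>0$ and $n\in\mathbb{N}$ there exists $N\in\mathbb{N}$ such that the following holds for every $N$-partitioned hypergraph $H$ and every choice of subsets $W_{jij'kj''}\subseteq V_{ik}$, for all $j,i,j',k,j''\in[N]$ with $j<i<j'<k<j''$, satisfying $|W_{jij'kj''}|\ge\delta|V_{ik}|$: there exist an induced $n$-partitioned subhypergraph $H'$ of $H$ with index set $I\subseteq[N]$ and vertices $w_{ik}\in V_{ik}$, for $i<k$, $i,k\in I$, such that $w_{ik}\in W_{jij'kj''}$ for all $j,j',j''\in I$ with $j<i<j'<k<j''$.
   Context: An $n$-partitioned hypergraph $H$ is a finite $3$-uniform hypergraph whose vertex set is partitioned into nonempty sets $V_{ij}$, $1\le i<j\le n$, such that every edge has, for some $1\le i<j<k\le n$, exactly one vertex in each of $V_{ij}$, $V_{ik}$, $V_{jk}$. For $I\subseteq[n]$, the induced subhypergraph with index set $I$ is the $|I|$-partitioned hypergraph with parts $V_{ij}$, $i<j$, $i,j\in I$ (indexed by elements of $I$) and all edges of $H$ contained in the union of these parts. *)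

(* Defs.v *)
From HB Require Import structures.
From mathcomp Require Import all_boot all_order all_algebra.
From mathcomp Require Export reals.
Set Implicit Arguments. Unset Strict Implicit. Unset Printing Implicit Defensive.

(* Indices [N] are represented by 'I_N (0-based; only the order matters).
   An N-partitioned hypergraph is given by a finite vertex type V,
   a map [part : V -> 'I_N * 'I_N] sending v to the (i,j) with v \in V_ij,
   and a set of edges E : {set {set V}}. *)

Definition Vpart (N : nat) (V : finType) (part : V -> 'I_N * 'I_N)
  (i j : 'I_N) : {set V} := [set v | part v == (i, j)].

Definition is_npartitioned (N : nat) (V : finType)
  (part : V -> 'I_N * 'I_N) (E : {set {set V}}) : Prop :=
  (forall v : V, ((part v).1 < (part v).2)%N) /\
  (forall i j : 'I_N, (i < j)%N -> exists v : V, v \in Vpart part i j) /\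
  (forall e, e \in E -> exists (i j k : 'I_N) (a b c : V),
      [/\ (i < j)%N, (j < k)%N & e = [set a; b; c]] /\
      [/\ a \in Vpart part i j, b \in Vpart part i k & c \in Vpart part j k]).

(* Main.v *)
Require Import Defs.
From HB Require Import structures.
From mathcomp Require Import all_boot all_order all_algebra.
From mathcomp Require Import reals.
From mathcomp Require Import zify lra.
Import Order.TTheory GRing.Theory Num.Theory.
Set Implicit Arguments. Unset Strict Implicit. Unset Printing Implicit Defensive.
Lemma subset_exact (T : finType) (A : {set T}) m :
  m <= #|A| -> exists B : {set T}, B \subset A /\ #|B| = m.
Proof.
case/card_geqP => s [us ss sub]; exists [set x in s]; split.
  by apply/subsetP => x; rewrite inE; exact: sub.
by rewrite cardsE (card_uniqP us).
Qed.

Lemma set_min K (S : {set 'I_K}) : S != set0 ->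
  exists2 x, x \in S & forall y, y \in S -> x <= y.
Proof.
case/set0Pn => x0 Hx0.
case: (@arg_minnP _ x0 (fun x => x \in S) (fun x : 'I_K => nat_of_ord x) Hx0) => x Hx Hmin.
by exists x.
Qed.

Lemma php (T C : finType) (X : {set T}) (f : T -> C) M :
  #|C| * M < #|X| -> exists c, M < #|[set x in X | f x == c]|.
Proof.
move=> H; apply/existsP; rewrite -[X in is_true X]negbK; apply/negP => /existsPn Hn.
have E : #|X| = \sum_(c : C) #|[set x in X | f x == c]|.
  rewrite -sum1_card (partition_big f predT) //=.
  by apply: eq_bigr => c _; rewrite -sum1_card; apply: eq_bigl => x; rewrite inE.
have : #|X| <= #|C| * M.
  rewrite E -sum_nat_const; apply: leq_sum => c _; by rewrite leqNgt Hn.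
by rewrite leqNgt H.
Qed.

Lemma ramsey r : forall (C : finType) M, exists N, forall K (P : {set 'I_K})
  (chi : {set 'I_K} -> C), N <= #|P| -> exists (H : {set 'I_K}) (c : C),
  [/\ H \subset P, M <= #|H| & forall S : {set 'I_K}, S \subset H -> #|S| = r -> chi S = c].
Proof.
elim: r => [|r IHr] C M.
  exists M => K P chi HP; exists P, (chi set0); split => // S _ /eqP.
  by rewrite cards_eq0 => /eqP ->.
have iter : forall L, exists N, forall K (P : {set 'I_K}) (chi : {set 'I_K} -> C),
  N <= #|P| -> exists (X : {set 'I_K}) (col : 'I_K -> C), [/\ X \subset P, L <= #|X| &
   forall x (S : {set 'I_K}), x \in X -> S \subset X -> #|S| = r -> (forall y, y \in S -> x < y) ->
     chi (x |: S) = col x].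
  elim => [|L [NL IHL]].
    exists 0 => K P chi _; exists set0, (fun _ => chi set0); split; rewrite ?sub0set //.
    by move=> x S; rewrite inE.
  have [NR HR] := IHr C NL.
  exists NR.+1 => K P chi HP.
  have Pn0 : P != set0 by rewrite -card_gt0; lia.
  have [x Px xmin] := set_min Pn0.
  have HP' : NR <= #|P :\ x| by move: HP; rewrite (cardsD1 x P) Px; lia.
  have [H [c [HsP HNL Hc]]] := HR K (P :\ x) (fun S => chi (x |: S)) HP'.
  have [X [col [XsH LX Hcol]]] := IHL K H chi HNL.
  have xX : x \notin X by apply/negP => /(subsetP XsH) /(subsetP HsP); rewrite !inE eqxx.
  exists (x |: X), (fun y => if y == x then c else col y); split.
  - rewrite subUset sub1set Px /=; apply: (subset_trans XsH); apply: (subset_trans HsP).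
    exact: subsetDl.
  - by rewrite cardsU1 xX; lia.
  move=> y S; rewrite in_setU1 => /orP [/eqP -> | yX] SX Sr Sgt.
    rewrite eqxx; apply: Hc => //; apply/subsetP => z zS.
    have := subsetP SX z zS; rewrite in_setU1 => /orP [/eqP zx|zX].
      by have := Sgt z zS; rewrite zx ltnn.
    exact: (subsetP XsH).
  have yx : y != x by apply/negP => /eqP yx; rewrite -yx yX in xX.
  rewrite (negbTE yx); apply: Hcol => //; apply/subsetP => z zS.
  have := subsetP SX z zS; rewrite in_setU1 => /orP [/eqP zx|//].
  have : y \in P.
    have := subsetP HsP y (subsetP XsH y yX); rewrite inE => /andP [].
    done.
  move/xmin; have := Sgt z zS; rewrite zx; lia.
have [N HN] := iter (#|C| * M).+1.
exists N => K P chi HP.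
have [X [col [XP LX Hcol]]] := HN K P chi HP.
have [c Hc] := php col (leq_trans (ltnSn _) LX).
exists [set x in X | col x == c], c; split.
- by apply: (subset_trans _ XP); apply/subsetP => x; rewrite inE => /andP [].
- exact: ltnW.
move=> S SH Sr.
have Sn0 : S != set0 by rewrite -card_gt0 Sr.
have [y yS ymin] := set_min Sn0.
have yH := subsetP SH y yS; rewrite inE in yH; case/andP: yH => yX /eqP <-.
rewrite -{1}(setD1K yS); apply: Hcol => //.
- apply/subsetP => z; rewrite inE => /andP [_ zS].
  by have := subsetP SH z zS; rewrite inE => /andP [].
- by move: Sr; rewrite (cardsD1 y S) yS; lia.
move=> z; rewrite !inE => /andP [zy zS]; have := ymin z zS.
rewrite leq_eqVlt => /orP [/eqP/val_inj yz|//]; by rewrite yz eqxx in zy.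
Qed.
Lemma card_sum (T : finType) (B : {set T}) (P : pred T) :
  #|[set b in B | P b]| = \sum_(b in B) (P b : nat).
Proof.
rewrite -sum1dep_card big_mkcondr /=; apply: eq_bigr => b _; by case: (P b).
Qed.

Lemma dc (T1 T2 : finType) (A : {set T1}) (B : {set T2}) (R : T1 -> T2 -> bool) :
  \sum_(a in A) #|[set b in B | R a b]| = \sum_(b in B) #|[set a in A | R a b]|.
Proof.
under eq_bigr => a _ do rewrite card_sum.
rewrite exchange_big /=; apply: eq_bigr => b _; by rewrite card_sum.
Qed.

Lemma cardX_sum (T1 T2 : finType) (X : {set T1}) (U : {set T2}) (D : T1 -> T2 -> bool) :
  #|[set p in setX X U | D p.1 p.2]| = \sum_(u in U) #|[set x in X | D x u]|.
Proof.
rewrite card_sum.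
rewrite (eq_bigl (fun p => (p.1 \in X) && (p.2 \in U))); last first.
  by move=> [x u]; rewrite /= in_setX.
rewrite -(pair_big (fun x => x \in X) (fun u => u \in U) (fun x u => (D x u : nat))) /=.
rewrite exchange_big /=; apply: eq_bigr => u _; by rewrite card_sum.
Qed.

Lemma points (T V : finType) (Box : {set T}) (Vs : {set V}) (W : T -> {set V}) K :
  Vs != set0 -> (forall t, t \in Box -> W t \subset Vs /\ #|Vs| <= K * #|W t|) ->
  exists2 v, v \in Vs & #|Box| <= K * #|[set t in Box | v \in W t]|.
Proof.
move=> Vn0 HW.
suff : [exists v in Vs, #|Box| <= K * #|[set t in Box | v \in W t]|].
  by case/existsP => v /andP [vV Hv]; exists v.
rewrite -[X in is_true X]negbK; apply/negP => /exists_inPn Hn.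
have h1 : \sum_(v in Vs) (K * #|[set t in Box | v \in W t]|).+1 <= \sum_(v in Vs) #|Box|.
  by apply: leq_sum => v vV; rewrite ltnNge Hn.
have h3 : \sum_(v in Vs) (K * #|[set t in Box | v \in W t]|).+1 =
   \sum_(v in Vs) (K * #|[set t in Box | v \in W t]|) + #|Vs|.
  by rewrite -[#|Vs|]sum1_card -big_split /=; apply: eq_bigr => v _; rewrite addn1.
have h2 : \sum_(t in Box) #|Vs| <= \sum_(v in Vs) (K * #|[set t in Box | v \in W t]|).
  rewrite -big_distrr /= -dc big_distrr /=; apply: leq_sum => t tB.
  have [sW cW] := HW t tB.
  suff -> : [set v in Vs | v \in W t] = W t by [].
  apply/setP => v; rewrite inE; case vW: (v \in W t); rewrite ?andbF ?andbT //.
  exact: (subsetP sW).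
move: h1 h2; rewrite h3 !sum_nat_const.
have : 0 < #|Vs| by rewrite card_gt0.
nia.
Qed.

Lemma php2 (T1 T2 : finType) (A : {set T1}) (B : {set T2}) (f : T1 -> T2) :
  A != set0 -> (forall x, x \in A -> f x \in B) ->
  exists2 c, c \in B & #|A| <= #|B| * #|[set x in A | f x == c]|.
Proof.
case/set0Pn => x0 xA fB.
have c0B := fB x0 xA.
case: (@arg_maxnP _ (f x0) (fun c => c \in B) (fun c => #|[set x in A | f x == c]|) c0B)
  => c cB cmax.
exists c => //.
rewrite -sum_nat_const -sum1_card (partition_big f (fun c => c \in B)) //=.
apply: leq_sum => c' c'B; apply: (leq_trans _ (cmax c' c'B)).
by rewrite -sum1_card; apply: eq_leq; apply: eq_bigl => x; rewrite inE.
Qed.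

Lemma kst1 (T1 T2 : finType) (X : {set T1}) (U : {set T2}) (D : T1 -> T2 -> bool) K :
  0 < K -> #|X| * #|U| <= K * \sum_(u in U) #|[set x in X | D x u]| ->
  exists (Tx : {set T1}) (U' : {set T2}), [/\ Tx \subset X, U' \subset U,
    #|X| <= 2 * K * #|Tx|, #|U| <= 2 * K * 2 ^ #|X| * #|U'| &
    forall x u, x \in Tx -> u \in U' -> D x u].
Proof.
move=> K0 HD.
have [s0|spos] := posnP #|X|.
  exists set0, U; split; rewrite ?sub0set ?subxx ?s0 //; last by move=> x u; rewrite inE.
  rewrite expn0; nia.
have [U0|Upos] := posnP #|U|.
  exists X, set0; split; rewrite ?sub0set ?subxx ?U0 //; last by move=> x u _; rewrite inE.
  nia.
pose f u := [set x in X | D x u].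
pose P u := #|X| <= 2 * K * #|f u|.
pose U2 := [set u in U | P u].
have split_sum : \sum_(u in U) #|f u| = \sum_(u in U | P u) #|f u| + \sum_(u in U | ~~ P u) #|f u|.
  exact: bigID.
have hA : \sum_(u in U | P u) #|f u| <= #|U2| * #|X|.
  rewrite -sum_nat_cond_const; apply: leq_sum => u _.
  by rewrite subset_leq_card // /f; apply/subsetP => x; rewrite inE => /andP [].
have hB : 2 * K * \sum_(u in U | ~~ P u) #|f u| <= #|U| * #|X|.
  rewrite big_distrr /=; apply: (@leq_trans (\sum_(u in U | ~~ P u) #|X|)).
    by apply: leq_sum => u /andP [_ nP]; rewrite /P -ltnNge in nP; exact: ltnW.
  rewrite sum_nat_cond_const leq_mul2r subset_leq_card ?orbT //.
  by apply/subsetP => u; rewrite inE => /andP [].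
have hU2 : #|U| <= 2 * K * #|U2|.
  have e : \sum_(u in U) #|[set x in X | D x u]| = \sum_(u in U) #|f u| by [].
  rewrite e split_sum in HD.
  have : #|X| * #|U| <= 2 * K * #|U2| * #|X|.
    move: HD hA hB; set a := \sum_(u in U | P u) _; set b := \sum_(u in U | _) _.
    move=> HD hA hB; have hA' : K * a <= K * (#|U2| * #|X|) := leq_mul (leqnn K) hA.
    lia.
  rewrite mulnC leq_mul2r; case/orP => // /eqP; lia.
have U2n0 : U2 != set0 by rewrite -card_gt0; nia.
have fB : forall u, u \in U2 -> f u \in powerset X.
  by move=> u _; rewrite powersetE; apply/subsetP => x; rewrite inE => /andP [].
have [Tx Tpow HT] := php2 U2n0 fB.
rewrite card_powerset in HT.
set U' := [set u in U2 | f u == Tx] in HT.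
have : 0 < #|U'| by move: HT; rewrite -card_gt0 in U2n0; nia.
rewrite card_gt0 => /set0Pn [u0 u0U'].
have u0U2 : u0 \in U2 by move: u0U'; rewrite inE => /andP [].
have fu0 : f u0 = Tx by move: u0U'; rewrite inE => /andP [_ /eqP].
exists Tx, U'; split.
- by rewrite -powersetE.
- apply/subsetP => u; rewrite !inE => /andP [/andP [] //].
- by move: u0U2; rewrite inE -fu0 => /andP [].
- have := leq_mul (leqnn (2 * K)) HT; lia.
move=> x u xT; rewrite !inE => /andP [_ /eqP fu].
by move: xT; rewrite -fu inE => /andP [].
Qed.
Section Ord.
Variable N : nat.
Implicit Types (S H L R : {set 'I_N}) (i k x : 'I_N).

Definition rk S i := #|[set x in S | x < i]|.

Lemma decomp_card L R i : (forall x, x \in L -> x < i) -> (forall x, x \in R -> i < x) ->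
  #|L :|: (i |: R)| = #|L| + 1 + #|R|.
Proof.
move=> HL HR.
have iR : i \notin R by apply/negP => /HR; rewrite ltnn.
have iL : i \notin L by apply/negP => /HL; rewrite ltnn.
rewrite cardsU cardsU1 iR.
suff -> : L :&: (i |: R) = set0 by rewrite cards0; lia.
apply/setP => x; rewrite !inE; apply/negP => /andP [xL /orP [/eqP xi|xR]].
  by move: xL; rewrite xi (negbTE iL).
by have := HL x xL; have := HR x xR; lia.
Qed.

Lemma decomp_lo L R i : (forall x, x \in L -> x < i) -> (forall x, x \in R -> i < x) ->
  [set x in L :|: (i |: R) | x < i] = L.
Proof.
move=> HL HR; apply/setP => x; rewrite !inE.
case xL: (x \in L); first by rewrite /= HL.
rewrite /=; case/boolP: (x == i) => [/eqP ->|_]; first by rewrite ltnn.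
case xR: (x \in R) => //=; have := HR x xR; lia.
Qed.

Lemma decomp_hi L R i : (forall x, x \in L -> x < i) -> (forall x, x \in R -> i < x) ->
  [set x in L :|: (i |: R) | i < x] = R.
Proof.
move=> HL HR; apply/setP => x; rewrite !inE.
case xR: (x \in R); first by rewrite !orbT /= HR.
rewrite orbF; case/boolP: (x == i) => [/eqP ->|_]; first by rewrite ltnn andbF.
case xL: (x \in L) => //=; have := HL x xL; lia.
Qed.

Lemma split_set H i : i \in H -> H = [set x in H | x < i] :|: (i |: [set x in H | i < x]).
Proof.
move=> iH; apply/setP => x; rewrite !inE.
case/boolP: (x == i) => [/eqP ->|xi]; first by rewrite iH ltnn !orbT.
case xH: (x \in H) => //=.
have : nat_of_ord x != nat_of_ord i by apply: contra xi => /eqP h; apply/eqP/val_inj.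
lia.
Qed.

Lemma card_split H i : i \in H ->
  #|H| = rk H i + 1 + #|[set x in H | i < x]|.
Proof.
move=> iH; rewrite {1}(split_set iH) decomp_card //.
  by move=> x; rewrite inE => /andP [].
by move=> x; rewrite inE => /andP [].
Qed.

Lemma set_min' S : S != set0 ->
  exists2 x, x \in S & forall y, y \in S -> x <= y.
Proof.
case/set0Pn => x0 Hx0.
case: (@arg_minnP _ x0 (fun x => x \in S) (fun x : 'I_N => nat_of_ord x) Hx0) => x Hx Hmin.
by exists x.
Qed.

Lemma rank_exists H m : m < #|H| -> exists2 i, i \in H & rk H i = m.
Proof.
elim: m => [|m IH] Hm.
  have Hn0 : H != set0 by rewrite -card_gt0; lia.
  have [x xH xmin] := set_min' Hn0.
  exists x => //; apply/eqP; rewrite cards_eq0; apply/eqP/setP => y; rewrite !inE.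
  apply/negP => /andP [yH]; have := xmin y yH; lia.
have [i iH ri] := IH (ltnW Hm).
have := card_split iH; rewrite ri => Hc.
have Hn0 : [set x in H | i < x] != set0 by rewrite -card_gt0; lia.
have [k kH kmin] := set_min' Hn0.
move: (kH); rewrite inE => /andP [kH' ik].
exists k => //; rewrite -ri /rk.
have -> : [set x in H | x < k] = [set x in H | x < i] :|: (i |: set0).
  apply/setP => x; rewrite !inE.
  case xH: (x \in H); last first.
    by rewrite /= orbF; apply/esym/negP => /eqP e; rewrite e iH in xH.
  rewrite /=.
  case/boolP: (x == i) => [/eqP ->|xi]; first by rewrite ik orbT.
  rewrite orbF; apply/idP/idP => [xk|xi']; last by lia.
  have : nat_of_ord x != nat_of_ord i by apply: contra xi => /eqP h; apply/eqP/val_inj.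
  move=> xi2; rewrite ltnNge; apply/negP => ix.
  have ix' : i < x by lia.
  have := kmin x; rewrite !inE xH ix' => /(_ isT); lia.
rewrite decomp_card ?cards0 ?addn0 ?addn1 //; first by move=> x; rewrite inE => /andP [].
by move=> x; rewrite inE.
Qed.

Lemma rk_mono S i i' : i \in S -> i < i' -> rk S i < rk S i'.
Proof.
move=> iS ii'.
rewrite /rk (cardsD1 i [set x in S | x < i']) !inE iS ii' /= add1n ltnS.
apply: subset_leq_card; apply/subsetP => x; rewrite !inE => /andP [xS xi].
rewrite xS /=; apply/andP; split; last by lia.
by apply/negP => /eqP e; rewrite e ltnn in xi.
Qed.

Lemma rk_lt S i : i \in S -> rk S i < #|S|.
Proof.
move=> iS; rewrite (card_split iS); lia.
Qed.

Lemma rk_inj S i i' : i \in S -> i' \in S -> rk S i = rk S i' -> i = i'.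
Proof.
move=> iS i'S e; apply/val_inj => /=.
case: (ltngtP i i') => // h.
  by have := rk_mono iS h; rewrite e ltnn.
by have := rk_mono i'S h; rewrite e ltnn.
Qed.

Lemma rk_le S i : rk S i <= #|S|.
Proof. by apply: subset_leq_card; apply/subsetP => x; rewrite inE => /andP []. Qed.

End Ord.
Lemma real_to_nat (R : realType) (d : R) K a b : (1 <= K%:R * d)%R -> (0 < d)%R ->
  (d * a%:R <= b%:R)%R -> (a <= K * b)%N.
Proof.
move=> h1 h2 h3; rewrite -(ler_nat R) natrM.
have ha : (0 <= a%:R :> R)%R by [].
have hK : (0 <= K%:R :> R)%R by [].
nra.
Qed.
Lemma kk (R : realType) (d : R) : (0 < d)%R -> exists K : nat, (0 < K)%N /\ (1 <= K%:R * d)%R.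
Proof.
move=> d0. have h : (0 <= d^-1)%R by rewrite invr_ge0 ltW.
have := archi_boundP h. set K := Num.bound _ => hK.
exists K; split.
  rewrite lt0n; apply/negP => /eqP K0. move: hK; rewrite K0 ltNge invr_ge0 ltW //.
rewrite -(ltr_pM2r d0) mulVf ?gt_eqF // in hK.
by rewrite ltW.
Qed.

Definition gpv (N : nat) (V : finType) (part : V -> 'I_N * 'I_N)
  (W : 'I_N -> 'I_N -> 'I_N -> 'I_N -> 'I_N -> {set V}) (S : {set 'I_N}) (i k : 'I_N) (v : V) : bool :=
  (v \in Vpart part i k) && [forall j, forall j', forall j'',
    ((j \in S) && (j' \in S) && (j'' \in S) && [&& (j < i)%N, (i < j')%N, (j' < k)%N & (k < j'')%N])
       ==> (v \in W j i j' k j'')].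

Definition gp N V part W S i k := [exists v, @gpv N V part W S i k v].

Definition color (n N : nat) (V : finType) (part : V -> 'I_N * 'I_N) W (S : {set 'I_N}) :
  ('I_n.+1 * 'I_n.+1)%type :=
  match [pick p : ('I_N * 'I_N)%type | [&& p.1 \in S, p.2 \in S, (p.1 < p.2)%N & ~~ gp part W S p.1 p.2]] with
  | Some p => (inord (rk S p.1), inord (rk S p.2))
  | None => (ord0, ord0)
  end.

Lemma le_cancel a b c : (0 < a)%N -> (a * b <= a * c)%N -> (b <= c)%N.
Proof. by move=> a0; rewrite leq_pmul2l. Qed.

Unset Implicit Arguments.

Theorem lemma4p2 (R : realType) (delta : R) (n : nat) :
  (0 < delta)%R ->
  exists N : nat,
    forall (V : finType) (part : V -> 'I_N * 'I_N) (E : {set {set V}}),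
      is_npartitioned part E ->
      forall W : 'I_N -> 'I_N -> 'I_N -> 'I_N -> 'I_N -> {set V},
        (forall j i j' k j'' : 'I_N,
            [&& (j < i)%N, (i < j')%N, (j' < k)%N & (k < j'')%N] ->
            W j i j' k j'' \subset Vpart part i k /\
            (delta * (#|Vpart part i k|)%:R <= (#|W j i j' k j''|)%:R)%R) ->
        exists (I : {set 'I_N}) (w : 'I_N -> 'I_N -> V),
          #|I| = n /\
          (forall i k : 'I_N, i \in I -> k \in I -> (i < k)%N ->
              w i k \in Vpart part i k) /\
          (forall j i j' k j'' : 'I_N,
              j \in I -> i \in I -> j' \in I -> k \in I -> j'' \in I ->
              [&& (j < i)%N, (i < j')%N, (j' < k)%N & (k < j'')%N] ->
              w i k \in W j i j' k j'').
Proof.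
move=> d0; have [K [K0 HK]] := kk d0.
pose mA := (2 * K * n)%N.
pose K2 := (2 * K * 2 ^ mA)%N.
pose mB := (2 * K2 * n)%N.
pose mC := (2 * K2 * 2 ^ mB * n)%N.
pose M0 := (n + mA + mB + mC + 2)%N.
have [NR HR] := ramsey n ('I_n.+1 * 'I_n.+1)%type M0.
exists NR.+2 => V part E [hv [hpart _]] W HW.
have [v0 _] := hpart ord0 (@Ordinal NR.+2 1 isT) isT.
have hN : (NR <= #|[set: 'I_NR.+2]|)%N by rewrite cardsT card_ord; lia.
have [H [c [_ HM0 Hc]]] := HR NR.+2 [set: 'I_NR.+2] (color n part W) hN.
have hn : (n <= #|H|)%N by rewrite /M0 in HM0; lia.
have [S1 [S1H S1n]] := subset_exact hn.
case Hp: [pick p : ('I_NR.+2 * 'I_NR.+2)%type | [&& p.1 \in S1, p.2 \in S1, (p.1 < p.2)%N & ~~ gp part W S1 p.1 p.2]] => [p|].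
  exfalso.
  have Hp0 := Hp.
  move: Hp0; case: pickP => // q /and4P [q1S q2S q12 nq] [qp]; subst q.
  set r1 := rk S1 p.1; set r2 := rk S1 p.2.
  have r12 : (r1 < r2)%N by apply: rk_mono.
  have r2n : (r2 < n)%N by rewrite -S1n; apply: rk_lt.
  have cS1 : c = (inord r1, inord r2) by rewrite -(Hc S1 S1H S1n) /color Hp.
  have hmA : (mA < #|H|)%N by rewrite /M0 in HM0; lia.
  have [i iH ri] := rank_exists hmA.
  pose H' := [set x in H | (i < x)%N].
  have cH : #|H| = (mA + 1 + #|H'|)%N by rewrite (card_split iH) ri.
  have hmB : (mB < #|H'|)%N by rewrite /M0 in HM0; lia.
  have [k kH' rk'] := rank_exists hmB.
  have cH' : #|H'| = (mB + 1 + #|[set x in H' | (k < x)%N]|)%N by rewrite (card_split kH') rk'.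
  pose A := [set x in H | (x < i)%N].
  pose B := [set x in H' | (x < k)%N].
  pose Cs := [set x in H' | (k < x)%N].
  have cA : #|A| = mA := ri.
  have cB : #|B| = mB := rk'.
  have cC : (mC <= #|Cs|)%N by rewrite /M0 in HM0; rewrite /Cs; lia.
  have [kH ik] : k \in H /\ (i < k)%N by move: kH'; rewrite inE => /andP [].
  have Ai : forall x, x \in A -> (x < i)%N by move=> x; rewrite inE => /andP [].
  have Bi : forall x, x \in B -> (i < x)%N && (x < k)%N.
    by move=> x; rewrite !inE => /andP [/andP [_ ->] ->].
  have Ck : forall x, x \in Cs -> (k < x)%N by move=> x; rewrite inE => /andP [].
  have [u0 u0V] := hpart i k ik.
  have Vn0 : Vpart part i k != set0 by apply/set0Pn; exists u0.
  have HWn : forall t, t \in setX A (setX B Cs) ->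
      W t.1 i t.2.1 k t.2.2 \subset Vpart part i k /\
      (#|Vpart part i k| <= K * #|W t.1 i t.2.1 k t.2.2|)%N.
    move=> [x [y z]]; rewrite !in_setX /= => /and3P [xA yB zC].
    have := Ai x xA; have := Bi y yB; have := Ck z zC => kz /andP [iy yk] xi.
    have ch : [&& (x < i)%N, (i < y)%N, (y < k)%N & (k < z)%N] by rewrite xi iy yk kz.
    have [h1 h2] := HW x i y k z ch; split => //; exact: real_to_nat HK d0 h2.
  have [v vV Hv] := points Vn0 HWn.
  have H1 : (#|A| * #|setX B Cs| <= K * \sum_(u in setX B Cs) #|[set x in A | v \in W x i u.1 k u.2]|)%N.
    have := cardX_sum A (setX B Cs) (fun x u => v \in W x i u.1 k u.2); move=> /= <-.
    rewrite -cardsX; exact: Hv.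
  have [TA [U1 [TAA U1s hTA hU1 HD1]]] := kst1 K0 H1.
  have H2 : (#|B| * #|Cs| <= K2 * \sum_(z in Cs) #|[set y in B | (y, z) \in U1]|)%N.
    have := cardX_sum B Cs (fun y z => (y, z) \in U1); move=> /= <-.
    have -> : [set p in setX B Cs | (p.1, p.2) \in U1] = U1.
      apply/setP => [[y z]]; rewrite !inE /=; apply/andP/idP => [[_ //]|h]; split => //.
      by have := subsetP U1s _ h; rewrite !inE.
    by rewrite -cardsX; move: hU1; rewrite cA.
  have K2pos : (0 < K2)%N by rewrite /K2 !muln_gt0 expn_gt0 K0.
  have [TB [C' [TBB C'C hTB hC' HD2]]] := kst1 K2pos H2.
  have nTA : (n <= #|TA|)%N.
    have : (2 * K * n <= 2 * K * #|TA|)%N by move: hTA; rewrite cA.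
    by apply: le_cancel; rewrite muln_gt0 K0.
  have nTB : (n <= #|TB|)%N.
    have : (2 * K2 * n <= 2 * K2 * #|TB|)%N by move: hTB; rewrite cB.
    by apply: le_cancel; rewrite muln_gt0 K2pos.
  have nC' : (n <= #|C'|)%N.
    rewrite cB in hC'.
    have : (2 * K2 * 2 ^ mB * n <= 2 * K2 * 2 ^ mB * #|C'|)%N by apply: leq_trans cC hC'.
    by apply: le_cancel; rewrite !muln_gt0 !expn_gt0 K0.
  have [A0 [A0T cA0]] : exists B : {set 'I_NR.+2}, B \subset TA /\ #|B| = r1.
    by apply: subset_exact; clear -r12 r2n nTA; lia.
  have [B0 [B0T cB0]] : exists B : {set 'I_NR.+2}, B \subset TB /\ #|B| = (r2 - r1 - 1).
    by apply: subset_exact; clear -r12 r2n nTB; lia.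
  have [C0 [C0T cC0]] : exists B : {set 'I_NR.+2}, B \subset C' /\ #|B| = (n - r2 - 1).
    by apply: subset_exact; clear -r12 r2n nC'; lia.
  have A0A : forall x, x \in A0 -> x \in A by move=> x /(subsetP A0T) /(subsetP TAA).
  have B0B : forall x, x \in B0 -> x \in B by move=> x /(subsetP B0T) /(subsetP TBB).
  have C0C : forall x, x \in C0 -> x \in Cs by move=> x /(subsetP C0T) /(subsetP C'C).
  have HA0 : forall x, x \in A0 -> (x < i)%N by move=> x /A0A /Ai.
  have HB0 : forall x, x \in B0 -> (i < x)%N && (x < k)%N by move=> x /B0B /Bi.
  have HC0 : forall x, x \in C0 -> (k < x)%N by move=> x /C0C /Ck.
  have HB0k : forall x, x \in B0 -> (x < k)%N by move=> x /HB0 /andP [].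
  have HR1 : forall x, x \in B0 :|: (k |: C0) -> (i < x)%N.
    move=> x; rewrite !inE => /orP [/HB0 /andP [] //|/orP [/eqP -> //|/HC0 kx]].
    exact: ltn_trans ik kx.
  pose S := A0 :|: (i |: (B0 :|: (k |: C0))).
  have cS : #|S| = n.
    rewrite /S decomp_card // decomp_card // cA0 cB0 cC0; clear -r12 r2n; lia.
  have SH : S \subset H.
    apply/subsetP => x; rewrite !inE => /orP [/A0A|/orP [/eqP -> //|/orP [/B0B|/orP [/eqP -> //|/C0C]]]].
    - by rewrite inE => /andP [].
    - by rewrite !inE => /andP [/andP [] ].
    - by rewrite !inE => /andP [/andP [] ].
  have iS : i \in S by rewrite !inE eqxx orbT.
  have kS : k \in S by rewrite !inE eqxx !orbT.
  have rSi : rk S i = r1 by rewrite /rk /S decomp_lo.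
  have hiS : [set x in S | (k < x)%N] = C0.
    apply/setP => x; rewrite inE.
    case kx: (k < x)%N; last first.
      by rewrite andbF; apply/esym/negbTE/negP => /HC0; rewrite kx.
    rewrite andbT !inE.
    have -> : (x \in A0) = false by apply/negbTE/negP => /HA0 xi; clear -xi kx ik; lia.
    have -> : (x == i) = false by apply/negbTE/negP => /eqP e; rewrite e in kx; clear -kx ik; lia.
    have -> : (x \in B0) = false by apply/negbTE/negP => /HB0k xk; clear -xk kx; lia.
    have -> : (x == k) = false by apply/negbTE/negP => /eqP e; rewrite e ltnn in kx.
    by [].
  have rSk : rk S k = r2.
    have := card_split kS; rewrite hiS cS cC0; clear -r12 r2n; lia.
  have lowS : forall x, x \in S -> (x < i)%N -> x \in A0.
    move=> x; rewrite !inE => /orP [//|/orP [/eqP ->|/orP [/HB0 /andP [h _]|/orP [/eqP ->|/HC0 h]]]] xi.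
    - by rewrite ltnn in xi.
    - by have := ltn_trans h xi; rewrite ltnn.
    - by have := ltn_trans ik xi; rewrite ltnn.
    - by have := ltn_trans ik (ltn_trans h xi); rewrite ltnn.
  have midS : forall x, x \in S -> (i < x)%N -> (x < k)%N -> x \in B0.
    move=> x; rewrite !inE => /orP [/HA0 h|/orP [/eqP ->|/orP [-> //|/orP [/eqP ->|/HC0 h]]]] ix xk.
    - by have := ltn_trans h ix; rewrite ltnn.
    - by rewrite ltnn in ix.
    - by rewrite ltnn in xk.
    - by have := ltn_trans h xk; rewrite ltnn.
  have highS : forall x, x \in S -> (k < x)%N -> x \in C0.
    by move=> x xS kx; rewrite -hiS inE xS kx.
  have gS : gp part W S i k.
    apply/existsP; exists v; rewrite /gpv vV /=.
    apply/forallP => j; apply/forallP => j'; apply/forallP => j''; apply/implyP.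
    move=> /andP [/andP [/andP [jS j'S] j''S] /and4P [ji ij' j'k kj'']].
    have jA : j \in TA by apply: (subsetP A0T); exact: lowS.
    have j'B : j' \in TB by apply: (subsetP B0T); exact: midS.
    have j''C : j'' \in C' by apply: (subsetP C0T); exact: highS.
    exact: (HD1 j (j', j'') jA (HD2 j' j'' j'B j''C)).
  move: (Hc S SH cS); rewrite /color cS1.
  case: pickP => [q' /and4P [q1 q2 q12' nq'] | _] e; last first.
    move: e => [_] /(f_equal (@nat_of_ord _)); rewrite /= inordK; clear -r12 r2n; lia.
  move: e => [] /(f_equal (@nat_of_ord _)) e1 /(f_equal (@nat_of_ord _)) e2.
  have rl : forall x, (rk S x <= n)%N by move=> x; rewrite -cS rk_le.
  rewrite /= !inordK ?ltnS ?rl // in e1 e2; try (clear -r12 r2n; lia).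
  have eq1 : q'.1 = i by apply: (rk_inj q1 iS); rewrite e1 rSi.
  have eq2 : q'.2 = k by apply: (rk_inj q2 kS); rewrite e2 rSk.
  by rewrite eq1 eq2 gS in nq'.
exists S1, (fun i k => odflt v0 [pick v | gpv part W S1 i k v]).
have good : forall i k, i \in S1 -> k \in S1 -> (i < k)%N -> gpv part W S1 i k (odflt v0 [pick v | gpv part W S1 i k v]).
  move=> i k iS kS ik.
  case: pickP => [v //|none] /=.
  have : gp part W S1 i k.
    move: Hp; case: pickP => // nobad _.
    have := nobad (i, k); rewrite /= => /negbT; by apply: contraR => ng; apply/and4P; split.
  by case/existsP => v; rewrite none.
split => //; split.
  by move=> i k iS kS ik; have := good i k iS kS ik; case/andP.
move=> j i j' k j'' jS iS j'S kS j''S ch.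
have ik : (i < k)%N by case/and4P: ch => *; lia.
have := good i k iS kS ik; case/andP => _ /forallP /(_ j) /forallP /(_ j') /forallP /(_ j'').
by move=> /implyP; apply; rewrite jS j'S j''S ch.
Qed.
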